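(* Let $\mu=(p,q,r,s)\in\mathbb{C}^4$, $\phi\in\Phi_\mu$, and $X\in\Omega_1$ with $x=\phi(X)$. The boundary of $X$ is a bi-infinite path of edges alternating $X\cap Y_n$, $X\cap Z_n$ ($n\in\mathbb{Z}$), with $Y_n\in\Omega_2$, $Z_n\in\Omega_3$, indexed so that $y_{n+1}=q-xz_n-y_n$ and $z_{n+1}=r-xy_{n+1}-z_n$ for all $n$, where $y_n=\phi(Y_n)$, $z_n=\phi(Z_n)$. For $x\neq\pm2$ put $\mathfrak y=\frac{2q-xr}{4-x^2}$, $\mathfrak z=\frac{2r-xq}{4-x^2}$, and say that $x$ is degenerate if $(px+s-x^2)(4-x^2)+q^2+r^2-qrx=0$. Then: (1) if $x\in(-2,2)$, then $|y_n|$ and $|z_n|$ remain bounded; (2) if $x=\pm2$, then $|y_n|$ and $|z_n|$ grow at most quadratically in $n$; (3) if $x\notin[-2,2]$ and $x$ is not degenerate, then $|y_n|$ and $|z_n|$ grow exponentially as $n\to+\infty$ and as $n\to-\infty$; (4) if $x\notin[-2,2]$ and $x$ is degenerate, then exactly one of the following holds: $y_n\to\mathfrak y$, $z_n\to\mathfrak z$ as $n\to-\infty$ and $|y_n|,|z_n|$ grow exponentially as $n\to+\infty$; or $y_n\to\mathfrak y$, $z_n\to\mathfrak z$ as $n\to+\infty$ and $|y_n|,|z_n|$ grow exponentially as $n\to-\infty$; or $y_n=\mathfrak y$ and $z_n=\mathfrak z$ for all $n\in\mathbb{Z}$.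
   Context: Let $\Sigma$ be a countably infinite simplicial tree, properly embedded in the plane, all of whose vertices have degree $3$. A complementary region is the closure of a connected component of the complement of $\Sigma$; $\Omega$ is the set of complementary regions, $E(\Sigma)$ the set of edges. Every edge $e$ is the intersection of exactly two regions $X,Y$, and its two endpoints lie on two further regions $Z,W$ respectively; write $e\leftrightarrow(X,Y;Z,W)$. Three regions meet at each vertex. Fix a coloring $\mathcal C:\Omega\cup E(\Sigma)\to\{1,2,3\}$ such that for every $e\leftrightarrow(X,Y;Z,W)$, $\mathcal C(e)=\mathcal C(Z)=\mathcal C(W)$ and $\mathcal C(e),\mathcal C(X),\mathcal C(Y)$ are pairwise distinct; $\Omega_i$, $E_i$ denote regions/edges of color $i$. For $\mu=(p,q,r,s)\in\mathbb{C}^4$, a $\mu$-Markoff map is $\phi:\Omega\to\mathbb{C}$ such that (i) at every vertex with regions $X\in\Omega_1,Y\in\Omega_2,Z\in\Omega_3$, $x^2+y^2+z^2+xyz=px+qy+rz+s$ where $x=\phi(X)$, etc.; (ii) for $e\in E_1$, $e\leftrightarrow(Y,Z;X,X')$: $\phi(X)+\phi(X')=p-\phi(Y)\phi(Z)$; for $e\in E_2$, $e\leftrightarrow(X,Z;Y,Y')$: $\phi(Y)+\phi(Y')=q-\phi(X)\phi(Z)$; for $e\in E_3$, $e\leftrightarrow(X,Y;Z,Z')$: $\phi(Z)+\phi(Z')=r-\phi(X)\phi(Y)$. $\Phi_\mu$ is the set of such maps. (The degeneracy condition on $x$ is the condition $AB=0$ of the paper, where $y_n=A\Lambda^{2n}+B\Lambda^{-2n}+\mathfrak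 y$ with $\Lambda=(x+\sqrt{x^2-4})/2$.) *)

(* Defs.v *)
From Stdlib Require Import Reals ZArith.
From Coquelicot Require Import Coquelicot.
Set Implicit Arguments.

(** Abstract incidence data of the planar trivalent tree Sigma:
    regions (complementary regions), edges and vertices, with
    - [sides e] = the two regions X,Y with e = X ∩ Y,
    - [ends e]  = the two further regions Z,W on which the endpoints of e lie
      (so e <-> (X,Y;Z,W)),
    - [at_vtx v R] : region R is one of the regions meeting at vertex v,
    - [rcol], [ecol] : the colouring C of regions and edges (values 1,2,3). *)
Record TreeData := {
  Reg : Type;
  Edg : Type;
  Vtx : Type;
  sides : Edg -> Reg * Reg;
  ends : Edg -> Reg * Reg;
  at_vtx : Vtx -> Reg -> Prop;
  rcol : Reg -> nat;
  ecol : Edg -> nat }.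

Definition good_coloring (S : TreeData) : Prop :=
  (forall R, (1 <= rcol S R <= 3)%nat) /\
  (forall e, (1 <= ecol S e <= 3)%nat /\
     ecol S e = rcol S (fst (ends S e)) /\ ecol S e = rcol S (snd (ends S e)) /\
     ecol S e <> rcol S (fst (sides S e)) /\ ecol S e <> rcol S (snd (sides S e)) /\
     rcol S (fst (sides S e)) <> rcol S (snd (sides S e))).

Definition mu_coef (p q r : C) (c : nat) : C :=
  match c with 1%nat => p | 2%nat => q | _ => r end.

Definition markoff_map (S : TreeData) (p q r s : C) (phi : Reg S -> C) : Prop :=
  (forall v X Y Z, at_vtx S v X -> at_vtx S v Y -> at_vtx S v Z ->
     rcol S X = 1%nat -> rcol S Y = 2%nat -> rcol S Z = 3%nat ->
     (phi X * phi X + phi Y * phi Y + phi Z * phi Z + phi X * phi Y * phi Z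
      = p * phi X + q * phi Y + r * phi Z + s)%C) /\
  (forall e,
     (phi (fst (ends S e)) + phi (snd (ends S e))
      = mu_coef p q r (ecol S e) - phi (fst (sides S e)) * phi (snd (sides S e)))%C).

Definition upair {T : Type} (ab : T * T) (c d : T) : Prop :=
  (fst ab = c /\ snd ab = d) \/ (fst ab = d /\ snd ab = c).

(** The boundary of X is the bi-infinite path of edges
    ... , eY n = X ∩ Y n, eZ n = X ∩ Z n, eY (n+1), ...
    eY n <-> (X, Y n; Z (n-1), Z n),  eZ n <-> (X, Z n; Y n, Y (n+1));
    vA n is the common vertex of eY n and eZ n (regions X, Y n, Z n),
    vB n is the common vertex of eZ n and eY (n+1) (regions X, Z n, Y (n+1)). *)
Definition boundary_path (S : TreeData) (X : Reg S) (Y Z : BinNums.Z -> Reg S)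
    (eY eZ : BinNums.Z -> Edg S) (vA vB : BinNums.Z -> Vtx S) : Prop :=
  forall n : BinNums.Z,
    rcol S (Y n) = 2%nat /\ rcol S (Z n) = 3%nat /\
    upair (sides S (eY n)) X (Y n) /\ upair (ends S (eY n)) (Z (n - 1)%Z) (Z n) /\
    upair (sides S (eZ n)) X (Z n) /\ upair (ends S (eZ n)) (Y n) (Y (n + 1)%Z) /\
    at_vtx S (vA n) X /\ at_vtx S (vA n) (Y n) /\ at_vtx S (vA n) (Z n) /\
    at_vtx S (vB n) X /\ at_vtx S (vB n) (Z n) /\ at_vtx S (vB n) (Y (n + 1)%Z).

Definition in_open_m2_2 (x : C) : Prop := Im x = 0%R /\ (-2 < Re x < 2)%R.
Definition in_closed_m2_2 (x : C) : Prop := Im x = 0%R /\ (-2 <= Re x <= 2)%R.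

Definition degenerate (p q r s x : C) : Prop :=
  ((p * x + s - x * x) * (4 - x * x) + q * q + r * r - q * r * x = 0)%C.

Definition yfrak (q r x : C) : C := ((2 * q - x * r) / (4 - x * x))%C.
Definition zfrak (q r x : C) : C := ((2 * r - x * q) / (4 - x * x))%C.

Definition bounded_seq (u : Z -> C) : Prop :=
  exists M : R, forall n : Z, (Cmod (u n) <= M)%R.

Definition at_most_quadratic (u : Z -> C) : Prop :=
  exists K : R, forall n : Z, (Cmod (u n) <= K * (1 + IZR n * IZR n))%R.

Definition exp_growth_nat (u : nat -> C) : Prop :=
  exists a c1 c2 : R, (1 < a)%R /\ (0 < c1)%R /\ (0 < c2)%R /\
    exists N : nat, forall k : nat, (N <= k)%nat ->
      (c1 * a ^ k <= Cmod (u k) <= c2 * a ^ k)%R.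

Definition exp_growth_plus (u : Z -> C) : Prop :=
  exp_growth_nat (fun k => u (Z.of_nat k)).
Definition exp_growth_minus (u : Z -> C) : Prop :=
  exp_growth_nat (fun k => u (- Z.of_nat k)%Z).

Definition conv_nat (u : nat -> C) (l : C) : Prop :=
  forall eps : R, (0 < eps)%R ->
    exists N : nat, forall k : nat, (N <= k)%nat -> (Cmod (u k - l) < eps)%R.

Definition conv_plus (u : Z -> C) (l : C) : Prop := conv_nat (fun k => u (Z.of_nat k)) l.
Definition conv_minus (u : Z -> C) (l : C) : Prop := conv_nat (fun k => u (- Z.of_nat k)%Z) l.

Definition exactly_one3 (P Q T : Prop) : Prop :=
  (P /\ ~ Q /\ ~ T) \/ (~ P /\ Q /\ ~ T) \/ (~ P /\ ~ Q /\ T).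

(* Main.v *)
Require Import Defs.
From Stdlib Require Import Reals ZArith.
From Coquelicot Require Import Coquelicot.
From Stdlib Require Import Lra Psatz Lia.
Open Scope R_scope.

Lemma Cmod_minus_le (u v : C) : Cmod (u - v) <= Cmod u + Cmod v.
Proof. unfold Cminus. eapply Rle_trans. apply Cmod_triangle. rewrite Cmod_opp. lra. Qed.

Lemma pow_big (rho T : R) : 1 < rho -> exists N : nat, forall n, (N <= n)%nat -> T < rho ^ n.
Proof.
  intros Hr.
  destruct (pow_lt_1_zero (/ rho)) with (y := / (Rabs T + 1)) as [N HN].
  { rewrite Rabs_pos_eq. rewrite <- Rinv_1. apply Rinv_1_lt_contravar; lra. left; apply Rinv_0_lt_compat; lra. }
  { apply Rinv_0_lt_compat. pose proof (Rabs_pos T). lra. }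
  exists N. intros n Hn. specialize (HN n Hn).
  rewrite <- Rinv_pow in HN by lra.
  assert (Hp : 0 < rho ^ n) by (apply pow_lt; lra).
  rewrite Rabs_pos_eq in HN by (left; apply Rinv_0_lt_compat; auto).
  pose proof (Rabs_pos T).
  apply Rinv_lt_cancel in HN; [|lra].
  pose proof (Rle_abs T). lra.
Qed.

Lemma growth (g A B : nat -> C) (d e : C) (rho : R) :
  1 < rho -> d <> 0%C ->
  (forall k, Cmod (A k) = rho^k * Cmod (A 0%nat)) ->
  (forall k, Cmod (B k) <= Cmod (B 0%nat)) ->
  (forall k, g k = ((B k - A k)/d + e)%C) ->
  A 0%nat <> 0%C -> exp_growth_nat g.
Proof.
  intros Hr Hd HA HB Hg HA0.
  set (a := Cmod (A 0%nat)). set (b := Cmod (B 0%nat)). set (dd := Cmod d). set (ee := Cmod e).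
  assert (Ha : 0 < a) by (apply Cmod_gt_0; auto).
  assert (Hdd : 0 < dd) by (apply Cmod_gt_0; auto).
  assert (Hb : 0 <= b) by apply Cmod_ge_0.
  assert (Hee : 0 <= ee) by apply Cmod_ge_0.
  destruct (pow_big rho (2 * (b + dd * ee) / a) Hr) as [N HN].
  exists rho, (a / (2 * dd)), ((a + b)/dd + ee + 1).
  split; [lra|]. split. { apply Rdiv_lt_0_compat; lra. }
  split. { assert (0 <= (a+b)/dd) by (apply Rdiv_le_0_compat; lra). lra. }
  exists N. intros k Hk.
  assert (Hp : 1 <= rho ^ k) by (apply pow_R1_Rle; lra).
  specialize (HN k Hk).
  assert (HBk := HB k). assert (HAk := HA k). fold a b in HAk, HBk.
  assert (Hup : Cmod (g k) <= (b + rho ^ k * a) / dd + ee).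
  { rewrite Hg. eapply Rle_trans. apply Cmod_triangle. fold ee.
    unfold Cdiv. rewrite Cmod_mult, Cmod_inv by auto. fold dd.
    apply Rplus_le_compat_r. unfold Rdiv. apply Rmult_le_compat_r.
    left; apply Rinv_0_lt_compat; lra.
    eapply Rle_trans. apply Cmod_minus_le. lra. }
  assert (Hlow : Cmod (A k) / dd <= Cmod (g k) + b / dd + ee).
  { assert (E : (- (A k / d) = g k + (- (B k / d) + - e))%C).
    { rewrite Hg. field. auto. }
    assert (E2 : Cmod (A k) / dd = Cmod (- (A k / d))).
    { rewrite Cmod_opp. unfold Cdiv. rewrite Cmod_mult, Cmod_inv by auto. reflexivity. }
    rewrite E2, E. eapply Rle_trans. apply Cmod_triangle.
    eapply Rle_trans. apply Rplus_le_compat_l. apply Cmod_triangle.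
    rewrite !Cmod_opp. unfold Cdiv. rewrite Cmod_mult, Cmod_inv by auto. fold dd ee.
    assert (Cmod (B k) * / dd <= b / dd).
    { unfold Rdiv. apply Rmult_le_compat_r; [left; apply Rinv_0_lt_compat|]; lra. }
    lra. }
  rewrite HAk in Hlow.
  set (P := rho ^ k) in *.
  split.
  - assert (E1 : a / (2 * dd) * P = P * a / dd / 2) by (field; lra).
    rewrite E1.
    assert (E3 : 2 * (b + dd * ee) / a * a = 2 * (b + dd*ee)) by (field; lra).
    assert (H4 : 2 * (b + dd * ee) < P * a).
    { rewrite <- E3. apply Rmult_lt_compat_r; lra. }
    assert (E5 : P * a / dd = b / dd + ee + (P * a - b - dd * ee) / dd) by (field; lra).
    assert (H6 : (P * a - b - dd * ee) / dd >= P * a / dd / 2).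
    { apply Rle_ge. unfold Rdiv. rewrite Rmult_assoc, (Rmult_comm (/dd)), <- Rmult_assoc.
      apply Rmult_le_compat_r. left; apply Rinv_0_lt_compat; lra. lra. }
    lra.
  - assert (E1 : ((a + b) / dd + ee + 1) * P = (a*P + b*P)/dd + ee * P + P) by (field; lra).
    rewrite E1.
    assert ((b + P * a) / dd <= (a * P + b * P) / dd).
    { unfold Rdiv. apply Rmult_le_compat_r. left; apply Rinv_0_lt_compat; lra. nra. }
    nra.
Qed.

Lemma convg (g B : nat -> C) (d e : C) (rho : R) :
  0 < rho < 1 -> d <> 0%C ->
  (forall k, Cmod (B k) = rho^k * Cmod (B 0%nat)) ->
  (forall k, g k = (B k / d + e)%C) -> conv_nat g e.
Proof.
  intros Hr Hd HB Hg eps Heps.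
  set (b := Cmod (B 0%nat)). set (dd := Cmod d).
  assert (Hdd : 0 < dd) by (apply Cmod_gt_0; auto).
  assert (Hb : 0 <= b) by apply Cmod_ge_0.
  destruct (pow_lt_1_zero rho) with (y := eps * dd / (b + 1)) as [N HN].
  { rewrite Rabs_pos_eq; lra. }
  { apply Rdiv_lt_0_compat; nra. }
  exists N. intros k Hk. specialize (HN k Hk).
  rewrite Rabs_pos_eq in HN by (apply pow_le; lra).
  assert (E : (g k - e = B k / d)%C) by (rewrite Hg; ring).
  rewrite E. unfold Cdiv. rewrite Cmod_mult, Cmod_inv, HB by auto. fold b dd.
  assert (Hp : 0 <= rho ^ k) by (apply pow_le; lra).
  assert (H1 : rho ^ k * (b + 1) < eps * dd).
  { apply (Rmult_lt_compat_r (b+1)) in HN; [|lra].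
    replace (eps * dd / (b + 1) * (b + 1)) with (eps * dd) in HN by (field; lra). lra. }
  assert (H2 : rho ^ k * b * / dd * dd = rho ^ k * b) by (field; lra).
  assert (H3 : rho ^ k * b * / dd < eps).
  { apply (Rmult_lt_reg_r dd); [lra|]. rewrite H2. nra. }
  exact H3.
Qed.

Lemma nz_side (L : C) : (L*L-1 <> 0)%C ->
  (RtoC (IZR 4) * (L*L) - (L*L + RtoC (IZR 1))*(L*L + RtoC (IZR 1)) <> 0)%C.
Proof.
  intros H E. apply H.
  assert (E2 : ((L*L-1)*(L*L-1) = 0)%C).
  { assert (E3 : ((L*L-1)*(L*L-1) = - (RtoC (IZR 4) * (L*L) - (L*L + RtoC (IZR 1))*(L*L + RtoC (IZR 1))))%C) by ring.
    rewrite E3, E. ring. }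
  destruct (Ceq_dec (L*L-1) 0) as [|Hn]; auto.
  exfalso. exact (Cmult_neq_0 _ _ Hn Hn E2).
Qed.

Ltac fld := field; repeat split; cbv beta; auto using nz_side, Cmult_neq_0.

Definition recN (q r x : C) (y z : nat -> C) : Prop :=
  forall k, y (S k) = (q - x * z k - y k)%C /\ z (S k) = (r - x * y (S k) - z k)%C.

Lemma closed_form (L q r : C) (y z : nat -> C) :
  L <> 0%C -> (L*L - 1 <> 0)%C -> recN q r (L + /L)%C y z ->
  forall k,
   ((y k - yfrak q r (L+/L)) + L*(z k - zfrak q r (L+/L))
      = (L*L)^k * ((y 0%nat - yfrak q r (L+/L)) + L*(z 0%nat - zfrak q r (L+/L))))%C /\
   (L*(y k - yfrak q r (L+/L)) + (z k - zfrak q r (L+/L))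
      = (/(L*L))^k * (L*(y 0%nat - yfrak q r (L+/L)) + (z 0%nat - zfrak q r (L+/L))))%C.
Proof.
  intros HL HL1 Hrec k. induction k as [|k [IH1 IH2]].
  - simpl. split; ring.
  - destruct (Hrec k) as [E1 E2]. rewrite E2, E1. rewrite !Cpow_S.
    rewrite <- Cmult_assoc, <- IH1. rewrite <- (Cmult_assoc (/ (L*L))), <- IH2.
    unfold yfrak, zfrak. split; fld.
Qed.

Lemma solve2 (L u v A B : C) : (L*L - 1 <> 0)%C -> (u + L*v = A)%C -> (L*u + v = B)%C ->
  u = ((L*B - A)/(L*L-1))%C /\ v = ((L*A - B)/(L*L-1))%C.
Proof. intros H E1 E2. subst A B. split; field; auto. Qed.

Lemma Cmod_powk (w c : C) (k : nat) : Cmod (w^k * c) = (Cmod w)^k * Cmod c.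
Proof. rewrite Cmod_mult, Cmod_pow. reflexivity. Qed.

Lemma nat_main (L q r : C) (y z : nat -> C) :
  L <> 0%C -> 1 < Cmod L -> recN q r (L + /L)%C y z ->
  let yf := yfrak q r (L+/L) in let zf := zfrak q r (L+/L) in
  let a := ((y 0%nat - yf) + L*(z 0%nat - zf))%C in
  (a <> 0%C -> exp_growth_nat y /\ exp_growth_nat z) /\
  (a = 0%C -> conv_nat y yf /\ conv_nat z zf).
Proof.
  intros HL HmL Hrec yf zf a.
  assert (HL1 : (L*L - 1 <> 0)%C).
  { intro E. assert (E' : (L*L = 1)%C) by (rewrite <- (Cplus_0_l 1), <- E; ring).
    apply (f_equal Cmod) in E'. rewrite Cmod_mult, Cmod_1 in E'. nra. }
  set (b := (L*(y 0%nat - yf) + (z 0%nat - zf))%C).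
  set (A := fun k => ((L*L)^k * a)%C). set (B := fun k => ((/(L*L))^k * b)%C).
  assert (HC := closed_form L q r y z HL HL1 Hrec). fold yf zf a b in HC.
  assert (Hyz : forall k, y k = ((L * B k - A k)/(L*L-1) + yf)%C /\ z k = ((L * A k - B k)/(L*L-1) + zf)%C).
  { intro k. destruct (HC k) as [E1 E2].
    destruct (solve2 L _ _ _ _ HL1 E1 E2) as [F1 F2]. unfold A, B.
    split; [rewrite <- F1 | rewrite <- F2]; ring. }
  set (rho := Cmod L * Cmod L).
  assert (Hrho : 1 < rho) by (unfold rho; nra).
  assert (HmLL : Cmod (L*L) = rho) by (apply Cmod_mult).
  assert (HmiLL : Cmod (/(L*L)) = / rho) by (rewrite Cmod_inv, HmLL; auto using Cmult_neq_0).
  assert (HiLL : 0 < / rho < 1).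
  { split. apply Rinv_0_lt_compat; lra. rewrite <- Rinv_1. apply Rinv_1_lt_contravar; lra. }
  assert (HAm : forall k, Cmod (A k) = rho ^ k * Cmod (A 0%nat)).
  { intro k. unfold A. rewrite !Cmod_powk, HmLL. simpl. ring. }
  assert (HBm : forall k, Cmod (B k) = (/rho) ^ k * Cmod (B 0%nat)).
  { intro k. unfold B. rewrite !Cmod_powk, HmiLL. simpl. ring. }
  assert (HBle : forall k, Cmod (B k) <= Cmod (B 0%nat)).
  { intro k. rewrite HBm. assert (0 <= (/rho)^k <= 1).
    { split. apply pow_le; lra. rewrite <- (pow1 k). apply pow_incr; lra. }
    pose proof (Cmod_ge_0 (B 0%nat)). nra. }
  split.
  - intro Ha. assert (HA0 : A 0%nat <> 0%C) by (unfold A; simpl; rewrite Cmult_1_l; auto).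
    split.
    + apply (growth y (fun k => A k) (fun k => (L * B k)%C) (L*L-1)%C yf rho); auto.
      * intro k. rewrite !Cmod_mult. apply Rmult_le_compat_l; [apply Cmod_ge_0|apply HBle].
      * intro k. apply Hyz.
    + apply (growth z (fun k => (- (L * A k))%C) (fun k => (- B k)%C) (L*L-1)%C zf rho); auto.
      * intro k. rewrite !Cmod_opp, !Cmod_mult, (HAm k). ring.
      * intro k. rewrite !Cmod_opp. apply HBle.
      * intro k. rewrite (proj2 (Hyz k)). f_equal. unfold Cdiv. ring.
      * intro E. apply (f_equal Cmod) in E. rewrite Cmod_opp, Cmod_mult, Cmod_0 in E.
        apply Cmod_gt_0 in HA0. nra.
  - intro Ha. assert (HA : forall k, A k = 0%C) by (intro k; unfold A; rewrite Ha; ring).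
    split.
    + apply (convg y (fun k => (L * B k)%C) (L*L-1)%C yf (/rho)); auto.
      * intro k. rewrite !Cmod_mult, HBm. simpl. ring.
      * intro k. rewrite (proj1 (Hyz k)), HA. unfold Cdiv. ring.
    + apply (convg z (fun k => (- B k)%C) (L*L-1)%C zf (/rho)); auto.
      * intro k. rewrite !Cmod_opp, HBm. simpl. ring.
      * intro k. rewrite (proj2 (Hyz k)), HA. unfold Cdiv. ring.
Qed.

Lemma LL1_nz (L : C) : 1 < Cmod L -> (L*L - 1 <> 0)%C.
Proof.
  intros HmL E. assert (E' : (L*L = 1)%C) by (rewrite <- (Cplus_0_l 1), <- E; ring).
  apply (f_equal Cmod) in E'. rewrite Cmod_mult, Cmod_1 in E'. nra.
Qed.

Lemma L_nz (L : C) : 1 < Cmod L -> L <> 0%C.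
Proof. intros H E. rewrite E, Cmod_0 in H. lra. Qed.

Lemma Cinv_nz (w : C) : w <> 0%C -> (/ w <> 0)%C.
Proof. intros H E. apply C1_nz. rewrite <- (Cinv_r w H), E. ring. Qed.

Lemma nat_const (L q r : C) (y z : nat -> C) :
  1 < Cmod L -> recN q r (L + /L)%C y z ->
  ((y 0%nat - yfrak q r (L+/L)) + L*(z 0%nat - zfrak q r (L+/L)) = 0)%C ->
  (L*(y 0%nat - yfrak q r (L+/L)) + (z 0%nat - zfrak q r (L+/L)) = 0)%C ->
  forall k, y k = yfrak q r (L+/L) /\ z k = zfrak q r (L+/L).
Proof.
  intros HmL Hrec Ha Hb k.
  assert (HL := L_nz L HmL). assert (HL1 := LL1_nz L HmL).
  destruct (closed_form L q r y z HL HL1 Hrec k) as [E1 E2].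
  rewrite Ha, Cmult_0_r in E1. rewrite Hb, Cmult_0_r in E2.
  destruct (solve2 L _ _ _ _ HL1 E1 E2) as [F1 F2].
  split.
  - replace (y k) with ((y k - yfrak q r (L+/L)) + yfrak q r (L+/L))%C by ring.
    rewrite F1. unfold Cdiv. ring.
  - replace (z k) with ((z k - zfrak q r (L+/L)) + zfrak q r (L+/L))%C by ring.
    rewrite F2. unfold Cdiv. ring.
Qed.

Lemma D_iff (L p q r s y0 z0 : C) : 1 < Cmod L ->
  ((L+/L)*(L+/L) + y0*y0 + z0*z0 + (L+/L)*y0*z0 = p*(L+/L) + q*y0 + r*z0 + s)%C ->
  (degenerate p q r s (L+/L) <->
   ((y0 - yfrak q r (L+/L)) + L*(z0 - zfrak q r (L+/L)) = 0)%C \/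
   (L*(y0 - yfrak q r (L+/L)) + (z0 - zfrak q r (L+/L)) = 0)%C).
Proof.
  intros HmL HV.
  assert (HL := L_nz L HmL). assert (HL1 := LL1_nz L HmL).
  assert (Hs : s = ((L+/L)*(L+/L) + y0*y0 + z0*z0 + (L+/L)*y0*z0 - (p*(L+/L) + q*y0 + r*z0))%C)
    by (rewrite HV; ring).
  set (a := ((y0 - yfrak q r (L+/L)) + L*(z0 - zfrak q r (L+/L)))%C).
  set (b := (L*(y0 - yfrak q r (L+/L)) + (z0 - zfrak q r (L+/L)))%C).
  assert (E : ((p * (L+/L) + s - (L+/L) * (L+/L)) * (4 - (L+/L) * (L+/L)) + q * q + r * r - q * r * (L+/L))%C
     = (- ((L*L-1)*(L*L-1)) / (L*L*L) * (a*b))%C).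
  { rewrite Hs. unfold a, b, yfrak, zfrak. fld. }
  assert (Hc : (- ((L*L-1)*(L*L-1)) / (L*L*L) <> 0)%C).
  { unfold Cdiv. apply Cmult_neq_0. intro E2. apply (Cmult_neq_0 _ _ HL1 HL1).
    replace ((L*L-1)*(L*L-1))%C with (- (- ((L*L-1)*(L*L-1))))%C by ring. rewrite E2. ring.
    apply Cinv_nz. repeat apply Cmult_neq_0; auto. }
  unfold degenerate. rewrite E. split.
  - intro H. destruct (Ceq_dec a 0) as [|Ha]; auto. destruct (Ceq_dec b 0) as [|Hb]; auto.
    exfalso. exact (Cmult_neq_0 _ _ Hc (Cmult_neq_0 _ _ Ha Hb) H).
  - intros [H|H]; rewrite H; ring.
Qed.

Lemma back_id (L q r y0 z0 : C) : 1 < Cmod L ->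
  ((y0 - yfrak q r (L+/L)) + L*((r - (L+/L)*y0 - z0) - zfrak q r (L+/L))
     = - L * (L*(y0 - yfrak q r (L+/L)) + (z0 - zfrak q r (L+/L))))%C /\
  (L*(y0 - yfrak q r (L+/L)) + ((r - (L+/L)*y0 - z0) - zfrak q r (L+/L))
     = - / L * ((y0 - yfrak q r (L+/L)) + L*(z0 - zfrak q r (L+/L))))%C.
Proof.
  intros HmL. assert (HL := L_nz L HmL). assert (HL1 := LL1_nz L HmL).
  unfold yfrak, zfrak. split; fld.
Qed.

Lemma csqrt_ex (w : C) : exists s : C, (s * s)%C = w.
Proof.
  destruct w as [a b].
  set (m := sqrt (a*a + b*b)).
  assert (Hm0 : 0 <= a*a+b*b) by nra.
  assert (Hmm : m * m = a*a+b*b) by (apply sqrt_sqrt; lra).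
  assert (Hm : 0 <= m) by apply sqrt_pos.
  assert (Ha1 : a <= m) by nra.
  assert (Ha2 : - m <= a) by nra.
  assert (Hp : 0 <= (m + a)/2) by lra.
  assert (Hn : 0 <= (m - a)/2) by lra.
  set (u := sqrt ((m+a)/2)). set (v0 := sqrt ((m-a)/2)).
  assert (Hu : u*u = (m+a)/2) by (apply sqrt_sqrt; lra).
  assert (Hv : v0*v0 = (m-a)/2) by (apply sqrt_sqrt; lra).
  assert (Huv : (u*v0)*(u*v0) = b*b/4).
  { replace ((u*v0)*(u*v0)) with ((u*u)*(v0*v0)) by ring. rewrite Hu, Hv. nra. }
  assert (Huv0 : 0 <= u*v0) by (apply Rmult_le_pos; apply sqrt_pos).
  destruct (Rle_or_lt 0 b) as [Hb|Hb].
  - exists (u, v0). unfold Cmult; simpl. f_equal.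
    + nra.
    + assert (u*v0 = b/2) by nra. nra.
  - exists (u, - v0). unfold Cmult; simpl. f_equal.
    + nra.
    + assert (u*v0 = - b/2) by nra. nra.
Qed.

Lemma mod1_closed (L : C) : L <> 0%C -> Cmod L = 1 -> in_closed_m2_2 (L + / L)%C.
Proof.
  destruct L as [a b]. intros HL Hm.
  unfold Cmod in Hm. simpl in Hm.
  assert (H2 : a * a + b * b = 1).
  { assert (E := sqrt_sqrt (a * (a * 1) + b * (b * 1))). rewrite Hm in E.
    assert (0 <= a * (a * 1) + b * (b * 1)) by nra. specialize (E H). nra. }
  unfold in_closed_m2_2, Cinv, Cplus. simpl.
  replace (a * (a * 1) + b * (b * 1)) with 1 by nra.
  split.
  - field.
  - assert (a <= 1) by nra. assert (-1 <= a) by nra.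
    replace (a + a / 1) with (2 * a) by field. lra.
Qed.

Lemma lam_ex (x : C) : ~ in_closed_m2_2 x -> exists L : C, 1 < Cmod L /\ x = (L + / L)%C.
Proof.
  intros Hx. destruct (csqrt_ex (x*x - 4)%C) as [s Hs].
  set (L0 := ((x + s)/2)%C).
  assert (HLL : (L0 * ((x - s)/2) = 1)%C).
  { unfold L0. assert (E : ((x + s) / 2 * ((x - s) / 2) = (x*x - s*s)/4)%C).
    { field. }
    rewrite E, Hs. field. }
  assert (HL0 : L0 <> 0%C).
  { intro E. rewrite E, Cmult_0_l in HLL. apply C1_nz. auto. }
  assert (Hinv : (/ L0 = (x - s)/2)%C).
  { rewrite <- (Cmult_1_l (/L0)), <- HLL. field. auto. }
  assert (Hx0 : x = (L0 + / L0)%C).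
  { rewrite Hinv. unfold L0. field. }
  destruct (Rtotal_order (Cmod L0) 1) as [Hlt|[Heq|Hgt]].
  - exists (/ L0)%C. split.
    + rewrite Cmod_inv by auto. rewrite <- Rinv_1. apply Rinv_0_lt_contravar; [apply Cmod_gt_0; auto|lra].
    + rewrite Hx0. field; repeat split; auto using Cinv_nz.
  - exfalso. apply Hx. rewrite Hx0. apply mod1_closed; auto.
  - exists L0. auto.
Qed.

Definition recR (c d t : R) (a b : nat -> R) : Prop :=
  forall k, a (S k) = c - t * b k - a k /\ b (S k) = d - t * a (S k) - b k.

Lemma bnd_real (a b : nat -> R) (c d t : R) : -2 < t < 2 -> recR c d t a b ->
  exists M, forall k, Rabs (a k) <= M /\ Rabs (b k) <= M.
Proof.
  intros Ht Hrec.
  assert (H4 : 4 - t*t <> 0) by nra.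
  set (fa := (2*c - t*d)/(4 - t*t)). set (fb := (2*d - t*c)/(4 - t*t)).
  set (h := fun k => (a k - fa)^2 + (b k - fb)^2 + t * (a k - fa) * (b k - fb)).
  assert (Hh : forall k, h k = h 0%nat).
  { induction k as [|k IH]; auto. rewrite <- IH. unfold h.
    destruct (Hrec k) as [E1 E2]. rewrite E2, E1. unfold fa, fb. field. auto. }
  set (H0 := h 0%nat).
  set (K := H0 / (1 - Rabs t / 2)).
  assert (Hat : Rabs t < 2) by (apply Rabs_def1; lra).
  assert (Hpos : 0 < 1 - Rabs t / 2) by lra.
  assert (Hsq : forall k, (a k - fa)^2 + (b k - fb)^2 <= K).
  { intro k. unfold K. apply (Rmult_le_reg_r (1 - Rabs t / 2)); auto.
    replace (H0 / (1 - Rabs t / 2) * (1 - Rabs t / 2)) with H0 by (field; lra).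
    unfold H0. rewrite <- (Hh k). unfold h.
    destruct (Rle_or_lt 0 t) as [Hp|Hn].
    - rewrite Rabs_pos_eq by lra.
      assert (0 <= t * ((a k - fa) + (b k - fb))^2) by (apply Rmult_le_pos; [lra|apply pow2_ge_0]).
      nra.
    - rewrite Rabs_left by lra.
      assert (0 <= - t * ((a k - fa) - (b k - fb))^2) by (apply Rmult_le_pos; [lra|apply pow2_ge_0]).
      nra. }
  exists (Rabs fa + Rabs fb + 1 + K). intro k. specialize (Hsq k).
  assert (HK : 0 <= K) by (pose proof (pow2_ge_0 (a k - fa)); pose proof (pow2_ge_0 (b k - fb)); lra).
  assert (HA : Rabs (a k - fa) <= 1 + K).
  { destruct (Rle_or_lt (Rabs (a k - fa)) 1); [lra|].
    assert (Rabs (a k - fa) * Rabs (a k - fa) <= K).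
    { rewrite <- Rabs_mult. rewrite Rabs_pos_eq by apply Rle_0_sqr. pose proof (pow2_ge_0 (b k - fb)).
      assert (E : (a k - fa)^2 = (a k - fa)*(a k - fa)) by ring. lra. }
    nra. }
  assert (HB : Rabs (b k - fb) <= 1 + K).
  { destruct (Rle_or_lt (Rabs (b k - fb)) 1); [lra|].
    assert (Rabs (b k - fb) * Rabs (b k - fb) <= K).
    { rewrite <- Rabs_mult. rewrite Rabs_pos_eq by apply Rle_0_sqr. pose proof (pow2_ge_0 (a k - fa)).
      assert (E : (b k - fb)^2 = (b k - fb)*(b k - fb)) by ring. lra. }
    nra. }
  split.
  - replace (a k) with ((a k - fa) + fa) by ring. eapply Rle_trans. apply Rabs_triang.
    pose proof (Rabs_pos fb). lra.
  - replace (b k) with ((b k - fb) + fb) by ring. eapply Rle_trans. apply Rabs_triang.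
    pose proof (Rabs_pos fa). lra.
Qed.

Lemma quad_real (a b : nat -> R) (c d t : R) : (t = 2 \/ t = -2) -> recR c d t a b ->
  exists K, forall k, Rabs (a k) <= K * (1 + INR k * INR k) /\ Rabs (b k) <= K * (1 + INR k * INR k).
Proof.
  intros Ht Hrec.
  assert (Hcf0 : forall a0 b0 E1 E2 F1 F2 : R, (a0 = a 0%nat) -> (b0 = b 0%nat) ->
    (E1 = -2*a0 - t*b0 + c) -> (E2 = t*a0 + 2*b0 + d - t*c) -> (F1 = 2*c - t*d) -> (F2 = 2*d - t*c) ->
    forall k, a k = a0 + INR k * E1 + INR k * (INR k - 1) / 2 * F1 /\ b k = b0 + INR k * E2 + INR k * (INR k - 1) / 2 * F2).
  { intros a0 b0 E1 E2 F1 F2 Ha0 Hb0 HE1 HE2 HF1 HF2.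
    induction k as [|k [IH1 IH2]].
    - simpl. rewrite Ha0, Hb0. split; field.
    - destruct (Hrec k) as [G1 G2]. rewrite G2, G1, IH1, IH2. rewrite S_INR.
      rewrite HE1, HE2, HF1, HF2. destruct Ht; subst t; split; field. }
  set (a0 := a 0%nat). set (b0 := b 0%nat).
  set (E1 := -2*a0 - t*b0 + c). set (E2 := t*a0 + 2*b0 + d - t*c).
  set (F1 := 2*c - t*d). set (F2 := 2*d - t*c).
  assert (Hcf := Hcf0 a0 b0 E1 E2 F1 F2 eq_refl eq_refl eq_refl eq_refl eq_refl eq_refl).
  set (K := Rabs a0 + Rabs b0 + Rabs E1 + Rabs E2 + Rabs F1 + Rabs F2).
  exists K. intro k. destruct (Hcf k) as [G1 G2].
  remember (INR k) as n eqn:Hneq.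
  assert (Hn : 0 <= n) by (rewrite Hneq; apply pos_INR).
  assert (Hn1 : n <= 1 + n*n) by (assert (0 <= (n - 1)*(n-1)) by apply Rle_0_sqr; lra).
  assert (Hq : Rabs (n * (n - 1) / 2) <= 1 + n * n).
  { destruct (Rle_or_lt 1 n).
    - rewrite Rabs_pos_eq. assert (0 <= n * (n+1)) by (apply Rmult_le_pos; lra). lra.
      assert (0 <= n * (n-1)) by (apply Rmult_le_pos; lra). lra.
    - apply Rabs_le. assert (0 <= n * (1-n)) by (apply Rmult_le_pos; lra).
      assert (0 <= n * n) by (apply Rmult_le_pos; lra). split; lra. }
  assert (Hnn : 0 <= n * n) by (apply Rmult_le_pos; lra).
  pose proof (Rabs_pos a0). pose proof (Rabs_pos b0). pose proof (Rabs_pos E1).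
  pose proof (Rabs_pos E2). pose proof (Rabs_pos F1). pose proof (Rabs_pos F2).
  split.
  - rewrite G1. eapply Rle_trans. apply Rabs_triang. eapply Rle_trans.
    apply Rplus_le_compat_r. apply Rabs_triang. rewrite !Rabs_mult, (Rabs_pos_eq n) by lra.
    assert (Rabs (n * (n - 1) / 2) * Rabs F1 <= (1 + n * n) * Rabs F1) by (apply Rmult_le_compat_r; auto).
    assert (n * Rabs E1 <= (1 + n*n) * Rabs E1) by (apply Rmult_le_compat_r; auto).
    unfold K. nra.
  - rewrite G2. eapply Rle_trans. apply Rabs_triang. eapply Rle_trans.
    apply Rplus_le_compat_r. apply Rabs_triang. rewrite !Rabs_mult, (Rabs_pos_eq n) by lra.
    assert (Rabs (n * (n - 1) / 2) * Rabs F2 <= (1 + n * n) * Rabs F2) by (apply Rmult_le_compat_r; auto).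
    assert (n * Rabs E2 <= (1 + n*n) * Rabs E2) by (apply Rmult_le_compat_r; auto).
    unfold K. nra.
Qed.

Lemma Cmod_le_ReIm (w : C) : Cmod w <= Rabs (Re w) + Rabs (Im w).
Proof.
  destruct w as [u v]. unfold Cmod, Re, Im. simpl.
  rewrite <- (sqrt_Rsqr (Rabs u + Rabs v)) by (pose proof (Rabs_pos u); pose proof (Rabs_pos v); lra).
  apply sqrt_le_1_alt. unfold Rsqr.
  pose proof (Rabs_pos u); pose proof (Rabs_pos v).
  assert (u * u = Rabs u * Rabs u) by (rewrite <- Rabs_mult; rewrite Rabs_pos_eq; nra).
  assert (v * v = Rabs v * Rabs v) by (rewrite <- Rabs_mult; rewrite Rabs_pos_eq; nra).
  nra.
Qed.

Lemma rec_split (t : R) (q r : C) (y z : nat -> C) : recN q r (t, 0%R) y z ->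
  recR (Re q) (Re r) t (fun k => Re (y k)) (fun k => Re (z k)) /\
  recR (Im q) (Im r) t (fun k => Im (y k)) (fun k => Im (z k)).
Proof.
  intros H. split; intro k; destruct (H k) as [E1 E2]; rewrite E2, E1;
  destruct q, r, (y k), (z k); unfold Cminus, Cplus, Copp, Cmult, Re, Im; simpl; split; ring.
Qed.

Lemma bnd_C (x q r : C) (y z : nat -> C) : in_open_m2_2 x -> recN q r x y z ->
  exists M, forall k, Cmod (y k) <= M /\ Cmod (z k) <= M.
Proof.
  destruct x as [t t2]. intros [Hi Ht] Hrec. simpl in Hi, Ht. subst t2.
  destruct (rec_split t q r y z Hrec) as [HR HI].
  destruct (bnd_real _ _ _ _ t Ht HR) as [M1 H1].
  destruct (bnd_real _ _ _ _ t Ht HI) as [M2 H2].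
  exists (M1 + M2). intro k. destruct (H1 k), (H2 k).
  split; eapply Rle_trans; try apply Cmod_le_ReIm; simpl in *; lra.
Qed.

Lemma quad_C (x q r : C) (y z : nat -> C) : (x = RtoC 2 \/ x = RtoC (-2)) -> recN q r x y z ->
  exists K, forall k, Cmod (y k) <= K * (1 + INR k * INR k) /\ Cmod (z k) <= K * (1 + INR k * INR k).
Proof.
  intros Hx Hrec.
  assert (Ht : exists t, x = (t, 0%R) /\ (t = 2 \/ t = -2)).
  { destruct Hx; subst x; [exists 2|exists (-2)]; auto. }
  destruct Ht as [t [Hxt Ht]]. subst x.
  destruct (rec_split t q r y z Hrec) as [HR HI].
  destruct (quad_real _ _ _ _ t Ht HR) as [M1 H1].
  destruct (quad_real _ _ _ _ t Ht HI) as [M2 H2].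
  exists (M1 + M2). intro k. destruct (H1 k), (H2 k).
  split; eapply Rle_trans; try apply Cmod_le_ReIm; simpl in *; lra.
Qed.

Lemma edge_eq (S : TreeData) (p q r s : C) (phi : Reg S -> C) (e : Edg S) (A B Cc D : Reg S) (c : nat) :
  good_coloring S -> markoff_map S p q r s phi ->
  upair (sides S e) A B -> upair (ends S e) Cc D -> rcol S Cc = c -> rcol S D = c ->
  (phi Cc + phi D = mu_coef p q r c - phi A * phi B)%C.
Proof.
  intros [_ Hc] [_ He] Hs Hn HC HD.
  specialize (He e). destruct (Hc e) as [_ [Hc1 _]].
  destruct Hs as [[Hs1 Hs2]|[Hs1 Hs2]]; destruct Hn as [[Hn1 Hn2]|[Hn1 Hn2]];
  rewrite Hs1, Hs2, Hn1, Hn2 in He; rewrite Hn1 in Hc1; rewrite Hc1 in He;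
  rewrite ?HC, ?HD in He; first [rewrite He | rewrite Cplus_comm, He]; ring.
Qed.

Lemma Z_cases (P : Z -> Prop) : (forall k, P (Z.of_nat k)) -> (forall k, P (- Z.of_nat k)%Z) -> forall n, P n.
Proof.
  intros H1 H2 n. destruct (Z_le_gt_dec 0 n).
  - rewrite <- (Z2Nat.id n) by lia. apply H1.
  - replace n with (- Z.of_nat (Z.to_nat (- n)))%Z by lia. apply H2.
Qed.

Lemma Z_cases' (P : Z -> Prop) : (forall k, P (Z.of_nat k)) -> (forall k, P (- Z.of_nat k - 1)%Z) -> forall n, P n.
Proof.
  intros H1 H2 n. destruct (Z_le_gt_dec 0 n).
  - rewrite <- (Z2Nat.id n) by lia. apply H1.
  - replace n with (- Z.of_nat (Z.to_nat (- n - 1)) - 1)%Z by lia. apply H2.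
Qed.

Lemma growth_shift (g : nat -> C) : exp_growth_nat (fun k => g (S k)) -> exp_growth_nat g.
Proof.
  intros [a [c1 [c2 [Ha [Hc1 [Hc2 [N HN]]]]]]].
  exists a, (c1 / a), (c2 / a). split; [lra|]. split; [apply Rdiv_lt_0_compat; lra|].
  split; [apply Rdiv_lt_0_compat; lra|].
  exists (S N). intros k Hk. destruct k as [|k]; [lia|].
  specialize (HN k ltac:(lia)). simpl in HN |- *.
  replace (c1 / a * (a * a ^ k)) with (c1 * a ^ k) by (field; lra).
  replace (c2 / a * (a * a ^ k)) with (c2 * a ^ k) by (field; lra). exact HN.
Qed.

Lemma conv_shift (g : nat -> C) (l : C) : conv_nat (fun k => g (S k)) l -> conv_nat g l.
Proof.
  intros H eps Heps. destruct (H eps Heps) as [N HN]. exists (S N). intros k Hk.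
  destruct k as [|k]; [lia|]. apply HN. lia.
Qed.

Lemma growth_shift' (g h : nat -> C) : (forall k, g (S k) = h k) -> exp_growth_nat h -> exp_growth_nat g.
Proof.
  intros E H. apply growth_shift.
  destruct H as [a [c1 [c2 [Ha [Hc1 [Hc2 [N HN]]]]]]].
  exists a, c1, c2. repeat split; auto. exists N. intros k Hk. rewrite E. auto.
Qed.

Lemma conv_shift' (g h : nat -> C) (l : C) : (forall k, g (S k) = h k) -> conv_nat h l -> conv_nat g l.
Proof.
  intros E H. apply conv_shift. intros eps Heps. destruct (H eps Heps) as [N HN].
  exists N. intros k Hk. rewrite E. auto.
Qed.

Lemma zshift (z : Z -> C) (k : nat) : z (- Z.of_nat (S k))%Z = z (- Z.of_nat k - 1)%Z.
Proof. f_equal. lia. Qed.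

Lemma growth_not_conv (u : nat -> C) (l : C) : exp_growth_nat u -> conv_nat u l -> False.
Proof.
  intros [a [c1 [c2 [Ha [Hc1 [Hc2 [N HN]]]]]]] Hc.
  destruct (Hc 1 ltac:(lra)) as [N1 HN1].
  destruct (pow_big a ((1 + Cmod l) / c1) Ha) as [N2 HN2].
  set (k := Nat.max N (Nat.max N1 N2)).
  specialize (HN k ltac:(lia)). specialize (HN1 k ltac:(lia)). specialize (HN2 k ltac:(lia)).
  destruct HN as [HN _].
  assert (Cmod (u k) <= Cmod (u k - l) + Cmod l).
  { replace (u k) with ((u k - l) + l)%C at 1 by ring. apply Cmod_triangle. }
  assert (E : (1 + Cmod l) / c1 * c1 = 1 + Cmod l) by (field; lra).
  assert ((1 + Cmod l) / c1 * c1 < a ^ k * c1) by (apply Rmult_lt_compat_r; lra).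
  lra.
Qed.

Lemma const_conv (u : nat -> C) (l : C) : (forall k, u k = l) -> conv_nat u l.
Proof.
  intros H eps Heps. exists 0%nat. intros k _. rewrite H.
  assert (E : (l - l)%C = RtoC 0) by ring. rewrite E, Cmod_0. lra.
Qed.

Theorem lemma3p8 (S : TreeData) (p q r s : C) (phi : Reg S -> C)
    (X : Reg S) (Ys Zs : Z -> Reg S) (eY eZ : Z -> Edg S) (vA vB : Z -> Vtx S) :
  good_coloring S ->
  markoff_map S p q r s phi ->
  rcol S X = 1%nat ->
  boundary_path S X Ys Zs eY eZ vA vB ->
  let x := phi X in
  let y := fun n : Z => phi (Ys n) in
  let z := fun n : Z => phi (Zs n) in
  (in_open_m2_2 x -> bounded_seq y /\ bounded_seq z) /\
  (x = RtoC 2 \/ x = RtoC (-2) -> at_most_quadratic y /\ at_most_quadratic z) /\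
  (~ in_closed_m2_2 x -> ~ degenerate p q r s x ->
     exp_growth_plus y /\ exp_growth_plus z /\
     exp_growth_minus y /\ exp_growth_minus z) /\
  (~ in_closed_m2_2 x -> degenerate p q r s x ->
     exactly_one3
       (conv_minus y (yfrak q r x) /\ conv_minus z (zfrak q r x) /\
        exp_growth_plus y /\ exp_growth_plus z)
       (conv_plus y (yfrak q r x) /\ conv_plus z (zfrak q r x) /\
        exp_growth_minus y /\ exp_growth_minus z)
       (forall n : Z, y n = yfrak q r x /\ z n = zfrak q r x)).
Proof.
  intros Hcol Hmk HX Hbp x y z.
  assert (Hy : forall n, y (n + 1)%Z = (q - x * z n - y n)%C).
  { intro n. destruct (Hbp n) as [HYc [HZc [_ [_ [HsZ [HeZ _]]]]]].
    destruct (Hbp (n+1)%Z) as [HYc' _].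
    assert (E := edge_eq S p q r s phi (eZ n) X (Zs n) (Ys n) (Ys (n+1)%Z) 2 Hcol Hmk HsZ HeZ HYc HYc').
    simpl in E. unfold y, z, x. rewrite <- E. ring. }
  assert (Hz : forall n, z (n + 1)%Z = (r - x * y (n + 1)%Z - z n)%C).
  { intro n. destruct (Hbp (n+1)%Z) as [HYc [HZc [HsY [HeY _]]]].
    destruct (Hbp n) as [_ [HZc' _]].
    replace (n + 1 - 1)%Z with n in HeY by lia.
    assert (E := edge_eq S p q r s phi (eY (n+1)%Z) X (Ys (n+1)%Z) (Zs n) (Zs (n+1)%Z) 3 Hcol Hmk HsY HeY HZc' HZc).
    simpl in E. unfold y, z, x. rewrite <- E. ring. }
  assert (HV : (x*x + y 0%Z * y 0%Z + z 0%Z * z 0%Z + x * y 0%Z * z 0%Z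
                = p * x + q * y 0%Z + r * z 0%Z + s)%C).
  { destruct (Hbp 0%Z) as [HYc [HZc [_ [_ [_ [_ [HA1 [HA2 [HA3 _]]]]]]]]].
    destruct Hmk as [Hv _]. apply (Hv (vA 0%Z)); auto. }
  assert (Hzm1 : z (-1)%Z = (r - x * y 0%Z - z 0%Z)%C).
  { assert (E := Hz (-1)%Z). simpl in E. rewrite E. ring. }
  set (yF := fun k : nat => y (Z.of_nat k)). set (zF := fun k : nat => z (Z.of_nat k)).
  set (yB := fun k : nat => y (- Z.of_nat k)%Z). set (zB := fun k : nat => z (- Z.of_nat k - 1)%Z).
  assert (HrecF : recN q r x yF zF).
  { intro k. unfold yF, zF. rewrite Nat2Z.inj_succ, <- Z.add_1_r. split; [apply Hy|apply Hz]. }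
  assert (HrecB : recN q r x yB zB).
  { assert (G : forall m : Z, y m = (q - x * z m - y (m+1)%Z)%C /\ z (m - 1)%Z = (r - x * y m - z m)%C).
    { intro m. split.
      - rewrite (Hy m). ring.
      - assert (E := Hz (m-1)%Z). replace (m-1+1)%Z with m in E by lia. rewrite E. ring. }
    intro k. unfold yB, zB.
    destruct (G (- Z.of_nat k - 1)%Z) as [G1 G2].
    replace (- Z.of_nat k - 1 + 1)%Z with (- Z.of_nat k)%Z in G1 by lia.
    replace (- Z.of_nat (Datatypes.S k))%Z with (- Z.of_nat k - 1)%Z by lia.
    split; [exact G1 | exact G2]. }
  clearbody x.
  split.
  { intro Ho. destruct (bnd_C x q r yF zF Ho HrecF) as [M1 H1].
    destruct (bnd_C x q r yB zB Ho HrecB) as [M2 H2].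
    assert (HM1 : 0 <= M1) by (destruct (H1 0%nat); pose proof (Cmod_ge_0 (yF 0%nat)); lra).
    assert (HM2 : 0 <= M2) by (destruct (H2 0%nat); pose proof (Cmod_ge_0 (yB 0%nat)); lra).
    split; exists (M1 + M2).
    - apply (Z_cases (fun n => Cmod (y n) <= M1 + M2)); intro k.
      + destruct (H1 k) as [A _]. unfold yF in A. lra.
      + destruct (H2 k) as [A _]. unfold yB in A. lra.
    - apply (Z_cases' (fun n => Cmod (z n) <= M1 + M2)); intro k.
      + destruct (H1 k) as [_ A]. unfold zF in A. lra.
      + destruct (H2 k) as [_ A]. unfold zB in A. lra. }
  split.
  { intro Hq. destruct (quad_C x q r yF zF Hq HrecF) as [M1 H1].
    destruct (quad_C x q r yB zB Hq HrecB) as [M2 H2].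
    assert (HM1 : 0 <= M1).
    { destruct (H1 0%nat) as [A _]; pose proof (Cmod_ge_0 (yF 0%nat)). simpl in A. lra. }
    assert (HM2 : 0 <= M2).
    { destruct (H2 0%nat) as [A _]; pose proof (Cmod_ge_0 (yB 0%nat)). simpl in A. lra. }
    split; exists (M1 + M2).
    - apply (Z_cases (fun n => Cmod (y n) <= (M1 + M2) * (1 + IZR n * IZR n))); intro k.
      + destruct (H1 k) as [A _]. unfold yF in A. rewrite <- INR_IZR_INZ.
        pose proof (pos_INR k). nra.
      + destruct (H2 k) as [A _]. unfold yB in A. rewrite opp_IZR, <- INR_IZR_INZ.
        pose proof (pos_INR k). nra.
    - apply (Z_cases' (fun n => Cmod (z n) <= (M1 + M2) * (1 + IZR n * IZR n))); intro k.
      + destruct (H1 k) as [_ A]. unfold zF in A. rewrite <- INR_IZR_INZ.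
        pose proof (pos_INR k). nra.
      + destruct (H2 k) as [_ A]. unfold zB in A. rewrite minus_IZR, opp_IZR, <- INR_IZR_INZ.
        pose proof (pos_INR k). nra. }
  split.
  { intros Hnc Hnd. destruct (lam_ex x Hnc) as [L [HmL Hx]]. subst x.
    assert (HL := L_nz L HmL).
    assert (HD := D_iff L p q r s (y 0%Z) (z 0%Z) HmL HV).
    assert (Hab : ((y 0%Z - yfrak q r (L+/L)) + L*(z 0%Z - zfrak q r (L+/L)) <> 0)%C /\
                  (L*(y 0%Z - yfrak q r (L+/L)) + (z 0%Z - zfrak q r (L+/L)) <> 0)%C).
    { split; intro E; apply Hnd, HD; auto. }
    destruct Hab as [Ha Hb].
    destruct (back_id L q r (y 0%Z) (z 0%Z) HmL) as [Ba Bb]. rewrite <- Hzm1 in Ba, Bb.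
    assert (Ha' : ((y 0%Z - yfrak q r (L+/L)) + L*(z (-1)%Z - zfrak q r (L+/L)) <> 0)%C).
    { rewrite Ba. apply Cmult_neq_0; auto. intro E. apply HL.
      replace L with (- (- L))%C by ring. rewrite E. ring. }
    assert (NF := nat_main L q r yF zF HL HmL HrecF). cbv zeta in NF.
    assert (NB := nat_main L q r yB zB HL HmL HrecB). cbv zeta in NB.
    destruct NF as [[F1 F2] _]; [exact Ha|].
    destruct NB as [[B1 B2] _]; [exact Ha'|].
    split; [exact F1|]. split; [exact F2|]. split; [exact B1|].
    apply (growth_shift' _ zB); [intro k; apply zshift | exact B2]. }
  intros Hnc Hdeg. destruct (lam_ex x Hnc) as [L [HmL Hx]]. subst x.
  assert (HL := L_nz L HmL).
  assert (HD := D_iff L p q r s (y 0%Z) (z 0%Z) HmL HV).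
  destruct (back_id L q r (y 0%Z) (z 0%Z) HmL) as [Ba Bb]. rewrite <- Hzm1 in Ba, Bb.
  assert (NF := nat_main L q r yF zF HL HmL HrecF). cbv zeta in NF.
  assert (NB := nat_main L q r yB zB HL HmL HrecB). cbv zeta in NB.
  destruct NF as [NF1 NF2]. destruct NB as [NB1 NB2].
  destruct (Ceq_dec ((y 0%Z - yfrak q r (L+/L)) + L*(z 0%Z - zfrak q r (L+/L))) 0) as [Ha|Ha];
  destruct (Ceq_dec (L*(y 0%Z - yfrak q r (L+/L)) + (z 0%Z - zfrak q r (L+/L))) 0) as [Hb|Hb].
  -
    assert (CF := nat_const L q r yF zF HmL HrecF Ha Hb).
    assert (Ha' : ((y 0%Z - yfrak q r (L+/L)) + L*(z (-1)%Z - zfrak q r (L+/L)) = 0)%C)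
      by (rewrite Ba, Hb; ring).
    assert (Hb' : (L*(y 0%Z - yfrak q r (L+/L)) + (z (-1)%Z - zfrak q r (L+/L)) = 0)%C)
      by (rewrite Bb, Ha; ring).
    assert (CB := nat_const L q r yB zB HmL HrecB Ha' Hb').
    assert (Hyc : forall n, y n = yfrak q r (L+/L)).
    { apply (Z_cases (fun n => y n = yfrak q r (L+/L))); intro k; [apply (CF k)|apply (CB k)]. }
    assert (Hzc : forall n, z n = zfrak q r (L+/L)).
    { apply (Z_cases' (fun n => z n = zfrak q r (L+/L))); intro k; [apply (CF k)|apply (CB k)]. }
    right; right. split; [|split].
    + intros [_ [_ [G _]]]. apply (growth_not_conv _ (yfrak q r (L+/L)) G). apply const_conv. intro k. apply Hyc.
    + intros [_ [_ [G _]]]. apply (growth_not_conv _ (yfrak q r (L+/L)) G). apply const_conv. intro k. apply Hyc.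
    + intro n. auto.
  - (* a = 0, b <> 0 : converge forward, grow backward *)
    assert (Ha' : ((y 0%Z - yfrak q r (L+/L)) + L*(z (-1)%Z - zfrak q r (L+/L)) <> 0)%C).
    { rewrite Ba. apply Cmult_neq_0; auto. intro E. apply HL.
      replace L with (- (- L))%C by ring. rewrite E. ring. }
    destruct (NF2 Ha) as [F1 F2]. destruct (NB1 Ha') as [B1 B2].
    assert (Q : conv_plus y (yfrak q r (L+/L)) /\ conv_plus z (zfrak q r (L+/L)) /\
        exp_growth_minus y /\ exp_growth_minus z).
    { split; [exact F1|]. split; [exact F2|]. split; [exact B1|].
      apply (growth_shift' _ zB); [intro k; apply zshift | exact B2]. }
    right; left. split; [|split].
    + intros [_ [_ [G _]]]. exact (growth_not_conv _ _ G F1).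
    + exact Q.
    + intro T. apply (growth_not_conv _ (yfrak q r (L+/L)) B1). apply const_conv. intro k. apply T.
  -
    assert (Ha' : ((y 0%Z - yfrak q r (L+/L)) + L*(z (-1)%Z - zfrak q r (L+/L)) = 0)%C)
      by (rewrite Ba, Hb; ring).
    destruct (NF1 Ha) as [F1 F2]. destruct (NB2 Ha') as [B1 B2].
    assert (P : conv_minus y (yfrak q r (L+/L)) /\ conv_minus z (zfrak q r (L+/L)) /\
        exp_growth_plus y /\ exp_growth_plus z).
    { split; [exact B1|]. split; [|split; [exact F1|exact F2]].
      apply (conv_shift' _ zB); [intro k; apply zshift | exact B2]. }
    left. split; [exact P|split].
    + intros [G _]. exact (growth_not_conv _ _ F1 G).
    + intro T. apply (growth_not_conv _ (yfrak q r (L+/L)) F1). apply const_conv. intro k. apply T.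
  - exfalso. apply HD in Hdeg. destruct Hdeg; auto.
Qed.
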